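(* Let $\mathsf C$ be any smooth vector field on $\mathbb R^3$ and $\widetilde\nabla$ the snm-connection determined by $\mathsf C$. Let $M$ be an oriented surface immersed in $\mathbb R^3$ with unit normal $N$, Gaussian curvature $G$ and mean curvature $H$ (with respect to the Euclidean Levi-Civita connection). Then at every point $p\in M$, $$K(p)=\widetilde K(T_pM)+G(p)-\langle \mathsf C(p),N(p)\rangle\, H(p).$$
   Context: Let $\langle\cdot,\cdot\rangle$ be the Euclidean metric on $\mathbb R^3$ and $\widetilde\nabla^0$ its Levi-Civita connection (the ordinary directional derivative). Given a smooth vector field $\mathsf C$ on $\mathbb R^3$, the semi-symmetric non-metric connection (snm-connection) determined by $\mathsf C$ is $\widetilde\nabla_XY=\widetilde\nabla^0_XY+\langle \mathsf C,Y\rangle X$. Its curvature tensor is $\widetilde R(X,Y)Z=\widetilde\nabla_X\widetilde\nabla_YZ-\widetilde\nabla_Y\widetilde\nabla_XZ-\widetilde\nabla_{[X,Y]}Z$. For a $2$-dimensional subspace $\pi\subset T_p\mathbb R^3$ with orthonormal basis $\{e_1,e_2\}$, its sectional curvature with respect to $\widetilde\nabla$ is $\widetilde K(\pi)=\frac12\big(\langle\widetilde R(e_1,e_2)e_2,e_1\rangle+\langle\widetilde R(e_2,e_1)e_1,e_2\rangle\big)$ (independent of the orthonormal basis). For a surface $M$ immersed in $\mathbb R^3$, the induced connection is $\nabla_XY=(\widetilde\nabla_XY)^{\top}$ (tangential component) for tangent vector fields $X,Y$, with curvature tensor $R$ defined by the same formula as $\widetilde R$, and the sectional curvature of $M$ with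 respect to $\widetilde\nabla$ at $p$ is $K(p)=\frac12\big(\langle R(e_1,e_2)e_2,e_1\rangle+\langle R(e_2,e_1)e_1,e_2\rangle\big)$ for an orthonormal basis $\{e_1,e_2\}$ of $T_pM$. The second fundamental form is $h(X,Y)=\langle\widetilde\nabla^0_XY,N\rangle$; $G$ is the determinant and $H$ is one half of the trace of the associated shape operator. *)

(* Defs.v *)
From Stdlib Require Import Reals.
From Coquelicot Require Import Coquelicot.
Open Scope R_scope.

Definition Vec3 : Type := (R * R * R)%type.
Definition Pt2 : Type := (R * R)%type.

Definition x1 (v : Vec3) : R := fst (fst v).
Definition x2 (v : Vec3) : R := snd (fst v).
Definition x3 (v : Vec3) : R := snd v.
Definition mk3 (a b c : R) : Vec3 := (a, b, c).

Definition vadd (v w : Vec3) : Vec3 := mk3 (x1 v + x1 w) (x2 v + x2 w) (x3 v + x3 w).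
Definition vopp (v : Vec3) : Vec3 := mk3 (- x1 v) (- x2 v) (- x3 v).
Definition vsub (v w : Vec3) : Vec3 := vadd v (vopp w).
Definition vscal (a : R) (v : Vec3) : Vec3 := mk3 (a * x1 v) (a * x2 v) (a * x3 v).
Definition vdot (v w : Vec3) : R := x1 v * x1 w + x2 v * x2 w + x3 v * x3 w.

Definition du (f : Pt2 -> R) (q : Pt2) : R := Derive (fun t => f (t, snd q)) (fst q).
Definition dv (f : Pt2 -> R) (q : Pt2) : R := Derive (fun t => f (fst q, t)) (snd q).

Fixpoint Ck2 (k : nat) (f : Pt2 -> R) : Prop :=
  match k with
  | O => forall q, continuous f q
  | S k => (forall q, ex_derive (fun t => f (t, snd q)) (fst q)
                   /\ ex_derive (fun t => f (fst q, t)) (snd q))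
           /\ Ck2 k (du f) /\ Ck2 k (dv f)
  end.
Definition smooth2 (f : Pt2 -> R) : Prop := forall k, Ck2 k f.

Definition d1 (f : Vec3 -> R) (x : Vec3) : R := Derive (fun t => f (mk3 t (x2 x) (x3 x))) (x1 x).
Definition d2 (f : Vec3 -> R) (x : Vec3) : R := Derive (fun t => f (mk3 (x1 x) t (x3 x))) (x2 x).
Definition d3 (f : Vec3 -> R) (x : Vec3) : R := Derive (fun t => f (mk3 (x1 x) (x2 x) t)) (x3 x).

Fixpoint Ck3 (k : nat) (f : Vec3 -> R) : Prop :=
  match k with
  | O => forall x, continuous f x
  | S k => (forall x, ex_derive (fun t => f (mk3 t (x2 x) (x3 x))) (x1 x)
                   /\ ex_derive (fun t => f (mk3 (x1 x) t (x3 x))) (x2 x)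
                   /\ ex_derive (fun t => f (mk3 (x1 x) (x2 x) t)) (x3 x))
           /\ Ck3 k (d1 f) /\ Ck3 k (d2 f) /\ Ck3 k (d3 f)
  end.
Definition smooth3 (f : Vec3 -> R) : Prop := forall k, Ck3 k f.

Definition smooth_field3 (X : Vec3 -> Vec3) : Prop :=
  smooth3 (fun x => x1 (X x)) /\ smooth3 (fun x => x2 (X x)) /\ smooth3 (fun x => x3 (X x)).
Definition smooth_map23 (f : Pt2 -> Vec3) : Prop :=
  smooth2 (fun q => x1 (f q)) /\ smooth2 (fun q => x2 (f q)) /\ smooth2 (fun q => x3 (f q)).
Definition smooth_map22 (f : Pt2 -> Pt2) : Prop :=
  smooth2 (fun q => fst (f q)) /\ smooth2 (fun q => snd (f q)).

Definition ddir3 (X : Vec3 -> Vec3) (f : Vec3 -> R) (x : Vec3) : R :=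
  x1 (X x) * d1 f x + x2 (X x) * d2 f x + x3 (X x) * d3 f x.
Definition nabla0 (X Y : Vec3 -> Vec3) (x : Vec3) : Vec3 :=
  mk3 (ddir3 X (fun y => x1 (Y y)) x) (ddir3 X (fun y => x2 (Y y)) x)
      (ddir3 X (fun y => x3 (Y y)) x).
Definition lie3 (X Y : Vec3 -> Vec3) (x : Vec3) : Vec3 :=
  mk3 (ddir3 X (fun y => x1 (Y y)) x - ddir3 Y (fun y => x1 (X y)) x)
      (ddir3 X (fun y => x2 (Y y)) x - ddir3 Y (fun y => x2 (X y)) x)
      (ddir3 X (fun y => x3 (Y y)) x - ddir3 Y (fun y => x3 (X y)) x).
Definition snm (C : Vec3 -> Vec3) (X Y : Vec3 -> Vec3) (x : Vec3) : Vec3 :=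
  vadd (nabla0 X Y x) (vscal (vdot (C x) (Y x)) (X x)).
Definition curvT (C : Vec3 -> Vec3) (X Y Z : Vec3 -> Vec3) (x : Vec3) : Vec3 :=
  vsub (vsub (snm C X (snm C Y Z) x) (snm C Y (snm C X Z) x)) (snm C (lie3 X Y) Z x).
(** sectional curvature of the plane spanned by E1 p, E2 p (orthonormal),
    computed with vector fields E1, E2 extending them *)
Definition secT (C : Vec3 -> Vec3) (E1 E2 : Vec3 -> Vec3) (p : Vec3) : R :=
  / 2 * (vdot (curvT C E1 E2 E2 p) (E1 p) + vdot (curvT C E2 E1 E1 p) (E2 p)).

(** * Surface geometry, for an immersion phi : R^2 -> R^3 (a local patch) *)
Definition pu (phi : Pt2 -> Vec3) (q : Pt2) : Vec3 :=
  mk3 (du (fun r => x1 (phi r)) q) (du (fun r => x2 (phi r)) q) (du (fun r => x3 (phi r)) q).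
Definition pv (phi : Pt2 -> Vec3) (q : Pt2) : Vec3 :=
  mk3 (dv (fun r => x1 (phi r)) q) (dv (fun r => x2 (phi r)) q) (dv (fun r => x3 (phi r)) q).

Definition immersion (phi : Pt2 -> Vec3) : Prop :=
  forall q a b, vadd (vscal a (pu phi q)) (vscal b (pv phi q)) = mk3 0 0 0 -> a = 0 /\ b = 0.

Definition unit_normal (phi : Pt2 -> Vec3) (N : Pt2 -> Vec3) : Prop :=
  forall q, vdot (N q) (pu phi q) = 0 /\ vdot (N q) (pv phi q) = 0 /\ vdot (N q) (N q) = 1.

(** Tangent vector fields on the surface, given by their coefficient functions
    X = a phi_u + b phi_v, with (a,b) = X q. *)
Definition realize (phi : Pt2 -> Vec3) (X : Pt2 -> Pt2) (q : Pt2) : Vec3 :=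
  vadd (vscal (fst (X q)) (pu phi q)) (vscal (snd (X q)) (pv phi q)).
Definition dS (X : Pt2 -> Pt2) (f : Pt2 -> R) (q : Pt2) : R :=
  fst (X q) * du f q + snd (X q) * dv f q.
Definition nabla0S (X : Pt2 -> Pt2) (W : Pt2 -> Vec3) (q : Pt2) : Vec3 :=
  mk3 (dS X (fun r => x1 (W r)) q) (dS X (fun r => x2 (W r)) q) (dS X (fun r => x3 (W r)) q).
Definition lieS (X Y : Pt2 -> Pt2) (q : Pt2) : Pt2 :=
  (dS X (fun r => fst (Y r)) q - dS Y (fun r => fst (X r)) q,
   dS X (fun r => snd (Y r)) q - dS Y (fun r => snd (X r)) q).
Definition tang (N : Pt2 -> Vec3) (w : Vec3) (q : Pt2) : Vec3 :=
  vsub w (vscal (vdot w (N q)) (N q)).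
(** induced connection nabla_X W = (nablaT_X W)^T, for W a (tangent) field along phi *)
Definition nablaS (C : Vec3 -> Vec3) (phi : Pt2 -> Vec3) (N : Pt2 -> Vec3)
    (X : Pt2 -> Pt2) (W : Pt2 -> Vec3) (q : Pt2) : Vec3 :=
  tang N (vadd (nabla0S X W q) (vscal (vdot (C (phi q)) (W q)) (realize phi X q))) q.
Definition curvS (C : Vec3 -> Vec3) (phi : Pt2 -> Vec3) (N : Pt2 -> Vec3)
    (X Y Z : Pt2 -> Pt2) (q : Pt2) : Vec3 :=
  vsub (vsub (nablaS C phi N X (nablaS C phi N Y (realize phi Z)) q)
             (nablaS C phi N Y (nablaS C phi N X (realize phi Z)) q))
       (nablaS C phi N (lieS X Y) (realize phi Z) q).
(** sectional curvature K of M w.r.t. nablaT, computed with tangent fields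
    E1, E2 that are orthonormal at q *)
Definition secS (C : Vec3 -> Vec3) (phi : Pt2 -> Vec3) (N : Pt2 -> Vec3)
    (E1 E2 : Pt2 -> Pt2) (q : Pt2) : R :=
  / 2 * (vdot (curvS C phi N E1 E2 E2 q) (realize phi E1 q)
         + vdot (curvS C phi N E2 E1 E1 q) (realize phi E2 q)).

(** First and second fundamental forms in the coordinate basis (phi_u, phi_v);
    h(X,Y) = <nabla0_X Y, N>, so h_ij = <d_i d_j phi, N>. *)
Definition fE (phi : Pt2 -> Vec3) q := vdot (pu phi q) (pu phi q).
Definition fF (phi : Pt2 -> Vec3) q := vdot (pu phi q) (pv phi q).
Definition fG (phi : Pt2 -> Vec3) q := vdot (pv phi q) (pv phi q).
Definition hL (phi N : Pt2 -> Vec3) q := vdot (nabla0S (fun _ => (1, 0)) (pu phi) q) (N q).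
Definition hM (phi N : Pt2 -> Vec3) q := vdot (nabla0S (fun _ => (1, 0)) (pv phi) q) (N q).
Definition hN (phi N : Pt2 -> Vec3) q := vdot (nabla0S (fun _ => (0, 1)) (pv phi) q) (N q).
(** Matrix of the shape operator A (with <A X, Y> = h(X,Y)) in the basis
    (phi_u, phi_v): A = I^{-1} II. *)
Definition shape11 phi N q :=
  (fG phi q * hL phi N q - fF phi q * hM phi N q) / (fE phi q * fG phi q - fF phi q ^ 2).
Definition shape12 phi N q :=
  (fG phi q * hM phi N q - fF phi q * hN phi N q) / (fE phi q * fG phi q - fF phi q ^ 2).
Definition shape21 phi N q :=
  (fE phi q * hM phi N q - fF phi q * hL phi N q) / (fE phi q * fG phi q - fF phi q ^ 2).
Definition shape22 phi N q :=
  (fE phi q * hN phi N q - fF phi q * hM phi N q) / (fE phi q * fG phi q - fF phi q ^ 2).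
Definition gaussK phi N q := shape11 phi N q * shape22 phi N q - shape12 phi N q * shape21 phi N q.
Definition meanH phi N q := / 2 * (shape11 phi N q + shape22 phi N q).

(* Main.v *)
Require Import Defs.
From Stdlib Require Import Reals.
From Coquelicot Require Import Coquelicot.
From Stdlib Require Import Lra Psatz FunctionalExtensionality Arith.
Open Scope R_scope.

Lemma eta3 (v : Vec3) : mk3 (x1 v) (x2 v) (x3 v) = v.
Proof. destruct v as [[a b] c]; reflexivity. Qed.

Lemma cont3_eps (f : Vec3 -> R) (p : Vec3) : continuous f p ->
  forall e, 0 < e -> exists d, 0 < d /\ forall y, Rabs (x1 y - x1 p) < d ->
    Rabs (x2 y - x2 p) < d -> Rabs (x3 y - x3 p) < d -> Rabs (f y - f p) < e.
Proof.
  intros Hc e He.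
  destruct (proj1 (filterlim_locally f (f p)) Hc (mkposreal e He)) as [d Hd].
  exists d; split; [apply cond_pos|]. intros y h1 h2 h3.
  apply (Hd y). split; [split|]; assumption.
Qed.

Lemma cont1_eps (f : R -> R) (p : R) : continuous f p ->
  forall e, 0 < e -> exists d, 0 < d /\ forall y, Rabs (y - p) < d -> Rabs (f y - f p) < e.
Proof.
  intros Hc e He.
  destruct (proj1 (filterlim_locally f (f p)) Hc (mkposreal e He)) as [d Hd].
  exists d; split; [apply cond_pos|]. intros y h1. apply (Hd y). exact h1.
Qed.

Lemma der_eps (f : R -> R) t0 l : is_derive f t0 l ->
  forall e, 0 < e -> exists d, 0 < d /\ forall h, h <> 0 -> Rabs h < d ->
     Rabs ((f (t0 + h) - f t0) / h - l) < e.
Proof.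
  intros H e He. apply is_derive_Reals in H.
  destruct (H e He) as [d Hd]. exists d; split; [apply cond_pos|]. exact Hd.
Qed.

Lemma prod_approx G Q g q e : Rabs (G - g) < e -> Rabs (Q - q) < e -> e <= 1 ->
  Rabs (G*Q - g*q) <= e * (Rabs q + Rabs g + 1).
Proof.
  intros h1 h2 h3.
  replace (G*Q - g*q) with ((G-g)*(Q-q) + (G-g)*q + g*(Q-q)) by ring.
  eapply Rle_trans. apply Rabs_triang.
  eapply Rle_trans. apply Rplus_le_compat_r. apply Rabs_triang.
  rewrite !Rabs_mult.
  assert (0 <= Rabs (G-g)) by apply Rabs_pos.
  assert (0 <= Rabs (Q-q)) by apply Rabs_pos.
  assert (0 <= Rabs q) by apply Rabs_pos.
  assert (0 <= Rabs g) by apply Rabs_pos.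
  nra.
Qed.

Lemma mvt_bound (a0 a c : R) : Rmin a0 a <= c <= Rmax a0 a -> Rabs (c - a0) <= Rabs (a - a0).
Proof.
  unfold Rmin, Rmax; destruct (Rle_dec a0 a); intros [h1 h2];
  unfold Rabs; repeat destruct Rcase_abs; lra.
Qed.

Lemma mvt1 (f : R -> R) (a0 a : R) :
  (forall s, ex_derive f s) ->
  exists c, Rmin a0 a <= c <= Rmax a0 a /\ f a - f a0 = Derive f c * (a - a0).
Proof.
  intros Hd.
  destruct (MVT_gen f a0 a (Derive f)) as [c [Hc Hc2]].
  - intros x _. apply Derive_correct, Hd.
  - intros x _. apply continuity_pt_filterlim. apply (ex_derive_continuous (K:=R_AbsRing) (V:=R_NormedModule)), Hd.
  - exists c; split; assumption.
Qed.
Notation dd1 := Defs.d1.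
Notation dd2 := Defs.d2.
Notation dd3 := Defs.d3.

Lemma chain3 (g : Vec3 -> R) (a b c : R -> R) t0 da db dc :
  (forall x, ex_derive (fun t => g (mk3 t (x2 x) (x3 x))) (x1 x)) ->
  (forall x, ex_derive (fun t => g (mk3 (x1 x) t (x3 x))) (x2 x)) ->
  (forall x, ex_derive (fun t => g (mk3 (x1 x) (x2 x) t)) (x3 x)) ->
  continuous (dd1 g) (mk3 (a t0) (b t0) (c t0)) ->
  continuous (dd2 g) (mk3 (a t0) (b t0) (c t0)) ->
  continuous (dd3 g) (mk3 (a t0) (b t0) (c t0)) ->
  is_derive a t0 da -> is_derive b t0 db -> is_derive c t0 dc ->
  is_derive (fun t => g (mk3 (a t) (b t) (c t))) t0
    (dd1 g (mk3 (a t0) (b t0) (c t0)) * da + dd2 g (mk3 (a t0) (b t0) (c t0)) * db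
     + dd3 g (mk3 (a t0) (b t0) (c t0)) * dc).
Proof.
  intros H1 H2 H3 Hc1 Hc2 Hc3 Ha Hb Hc.
  set (p0 := mk3 (a t0) (b t0) (c t0)) in *.
  set (g1 := dd1 g p0); set (g2 := dd2 g p0); set (g3 := dd3 g p0).
  apply is_derive_Reals. intros eps Heps.
  set (K := Rabs da + Rabs db + Rabs dc + Rabs g1 + Rabs g2 + Rabs g3 + 3).
  assert (HK : 3 <= K) by (unfold K; pose proof (Rabs_pos da); pose proof (Rabs_pos db);
    pose proof (Rabs_pos dc); pose proof (Rabs_pos g1); pose proof (Rabs_pos g2);
    pose proof (Rabs_pos g3); lra).
  set (e1 := Rmin 1 (eps / (2*K))).
  assert (He1 : 0 < e1) by (unfold e1; apply Rmin_pos; [lra| apply Rdiv_lt_0_compat; lra]).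
  assert (He1' : e1 <= 1) by (unfold e1; apply Rmin_l).
  assert (He1'' : e1 * K <= eps / 2).
  { unfold e1. assert (Rmin 1 (eps/(2*K)) <= eps/(2*K)) by apply Rmin_r.
    apply Rmult_le_compat_r with (r := K) in H; [|lra].
    eapply Rle_trans; [exact H|]. right; field; lra. }
  destruct (cont3_eps _ _ Hc1 e1 He1) as [dC1 [hdC1 HC1]].
  destruct (cont3_eps _ _ Hc2 e1 He1) as [dC2 [hdC2 HC2]].
  destruct (cont3_eps _ _ Hc3 e1 He1) as [dC3 [hdC3 HC3]].
  set (dC := Rmin dC1 (Rmin dC2 dC3)).
  assert (hdC : 0 < dC) by (unfold dC; repeat apply Rmin_pos; lra).
  assert (hdC1' : dC <= dC1) by (unfold dC; apply Rmin_l).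
  assert (hdC2' : dC <= dC2) by (unfold dC; eapply Rle_trans; [apply Rmin_r|apply Rmin_l]).
  assert (hdC3' : dC <= dC3) by (unfold dC; eapply Rle_trans; [apply Rmin_r|apply Rmin_r]).
  destruct (cont1_eps a t0 (ex_derive_continuous (K:=R_AbsRing) (V:=R_NormedModule) a t0 (ex_intro _ da Ha)) dC hdC) as [ca [hca Ca]].
  destruct (cont1_eps b t0 (ex_derive_continuous (K:=R_AbsRing) (V:=R_NormedModule) b t0 (ex_intro _ db Hb)) dC hdC) as [cb [hcb Cb]].
  destruct (cont1_eps c t0 (ex_derive_continuous (K:=R_AbsRing) (V:=R_NormedModule) c t0 (ex_intro _ dc Hc)) dC hdC) as [cc [hcc Cc]].
  destruct (der_eps a t0 da Ha e1 He1) as [ea [hea Ea]].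
  destruct (der_eps b t0 db Hb e1 He1) as [eb [heb Eb]].
  destruct (der_eps c t0 dc Hc e1 He1) as [ec [hec Ec]].
  set (del := Rmin (Rmin ca (Rmin cb cc)) (Rmin ea (Rmin eb ec))).
  assert (hdel : 0 < del) by (unfold del; repeat apply Rmin_pos; lra).
  exists (mkposreal del hdel). intros h hnz hlt. simpl in hlt.
  assert (l1 : Rabs h < ca) by (eapply Rlt_le_trans; [exact hlt|]; unfold del;
     eapply Rle_trans; [apply Rmin_l|apply Rmin_l]).
  assert (l2 : Rabs h < cb) by (eapply Rlt_le_trans; [exact hlt|]; unfold del;
     eapply Rle_trans; [apply Rmin_l|]; eapply Rle_trans; [apply Rmin_r|apply Rmin_l]).
  assert (l3 : Rabs h < cc) by (eapply Rlt_le_trans; [exact hlt|]; unfold del;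
     eapply Rle_trans; [apply Rmin_l|]; eapply Rle_trans; [apply Rmin_r|apply Rmin_r]).
  assert (l4 : Rabs h < ea) by (eapply Rlt_le_trans; [exact hlt|]; unfold del;
     eapply Rle_trans; [apply Rmin_r|apply Rmin_l]).
  assert (l5 : Rabs h < eb) by (eapply Rlt_le_trans; [exact hlt|]; unfold del;
     eapply Rle_trans; [apply Rmin_r|]; eapply Rle_trans; [apply Rmin_r|apply Rmin_l]).
  assert (l6 : Rabs h < ec) by (eapply Rlt_le_trans; [exact hlt|]; unfold del;
     eapply Rle_trans; [apply Rmin_r|]; eapply Rle_trans; [apply Rmin_r|apply Rmin_r]).
  assert (hh : Rabs (t0 + h - t0) < ca) by (replace (t0 + h - t0) with h by ring; exact l1).
  assert (hhb : Rabs (t0 + h - t0) < cb) by (replace (t0 + h - t0) with h by ring; exact l2).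
  assert (hhc : Rabs (t0 + h - t0) < cc) by (replace (t0 + h - t0) with h by ring; exact l3).
  specialize (Ca _ hh); specialize (Cb _ hhb); specialize (Cc _ hhc).
  specialize (Ea h hnz l4); specialize (Eb h hnz l5); specialize (Ec h hnz l6).
  set (A := a (t0 + h)) in *; set (B := b (t0 + h)) in *; set (Cv := c (t0 + h)) in *.
  set (a0 := a t0) in *; set (b0 := b t0) in *; set (c0 := c t0) in *.
  destruct (mvt1 (fun s => g (mk3 s B Cv)) a0 A (fun s => H1 (mk3 s B Cv))) as [xi1 [Hx1 M1]].
  destruct (mvt1 (fun s => g (mk3 a0 s Cv)) b0 B (fun s => H2 (mk3 a0 s Cv))) as [xi2 [Hx2 M2]].
  destruct (mvt1 (fun s => g (mk3 a0 b0 s)) c0 Cv (fun s => H3 (mk3 a0 b0 s))) as [xi3 [Hx3 M3]].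
  apply mvt_bound in Hx1; apply mvt_bound in Hx2; apply mvt_bound in Hx3.
  change (Derive (fun s : R => g (mk3 s B Cv)) xi1) with (dd1 g (mk3 xi1 B Cv)) in M1.
  change (Derive (fun s : R => g (mk3 a0 s Cv)) xi2) with (dd2 g (mk3 a0 xi2 Cv)) in M2.
  change (Derive (fun s : R => g (mk3 a0 b0 s)) xi3) with (dd3 g (mk3 a0 b0 xi3)) in M3.
  assert (G1 : Rabs (dd1 g (mk3 xi1 B Cv) - g1) < e1).
  { apply HC1; unfold p0; cbn [x1 x2 x3 mk3 fst snd]; lra. }
  assert (G2 : Rabs (dd2 g (mk3 a0 xi2 Cv) - g2) < e1).
  { apply HC2; unfold p0; cbn [x1 x2 x3 mk3 fst snd]; try lra.
    replace (a0 - a0) with 0 by ring; rewrite Rabs_R0; lra. }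
  assert (G3 : Rabs (dd3 g (mk3 a0 b0 xi3) - g3) < e1).
  { apply HC3; unfold p0; cbn [x1 x2 x3 mk3 fst snd]; try lra;
    match goal with |- Rabs (?x - ?x) < _ => replace (x - x) with 0 by ring; rewrite Rabs_R0; lra end. }
  assert (Eq : (g (mk3 A B Cv) - g (mk3 a0 b0 c0)) / h =
     dd1 g (mk3 xi1 B Cv) * ((A - a0)/h) + dd2 g (mk3 a0 xi2 Cv) * ((B - b0)/h)
     + dd3 g (mk3 a0 b0 xi3) * ((Cv - c0)/h)).
  { replace (g (mk3 A B Cv) - g (mk3 a0 b0 c0)) with
      ((g (mk3 A B Cv) - g (mk3 a0 B Cv)) + (g (mk3 a0 B Cv) - g (mk3 a0 b0 Cv))
       + (g (mk3 a0 b0 Cv) - g (mk3 a0 b0 c0))) by ring.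
    rewrite M1, M2, M3. field. exact hnz. }
  change (Rabs ((g (mk3 A B Cv) - g (mk3 a0 b0 c0)) / h - (g1 * da + g2 * db + g3 * dc)) < eps).
  rewrite Eq.
  pose proof (prod_approx _ _ _ _ _ G1 Ea He1').
  pose proof (prod_approx _ _ _ _ _ G2 Eb He1').
  pose proof (prod_approx _ _ _ _ _ G3 Ec He1').
  match goal with |- Rabs ?X < _ =>
    replace X with ((dd1 g (mk3 xi1 B Cv) * ((A - a0) / h) - g1 * da)
      + (dd2 g (mk3 a0 xi2 Cv) * ((B - b0) / h) - g2 * db)
      + (dd3 g (mk3 a0 b0 xi3) * ((Cv - c0) / h) - g3 * dc)) by ring end.
  eapply Rle_lt_trans. apply Rabs_triang.
  eapply Rle_lt_trans. apply Rplus_le_compat_r. apply Rabs_triang.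
  assert (e1 * (Rabs da + Rabs g1 + 1) + e1 * (Rabs db + Rabs g2 + 1) + e1 * (Rabs dc + Rabs g3 + 1) = e1 * K) by (unfold K; ring).
  lra.
Qed.

Definition Up2 (k : nat) (f : Pt2 -> R) := forall j, (j <= k)%nat -> Ck2 j f.

Lemma smooth2_Up f : smooth2 f -> forall k, Up2 k f.
Proof. intros H k j _; apply H. Qed.
Lemma Up_smooth2 f : (forall k, Up2 k f) -> smooth2 f.
Proof. intros H k; apply (H k k); lia. Qed.

Lemma smooth2_du f : smooth2 f -> smooth2 (du f).
Proof. intros H k; exact (proj1 (proj2 (H (S k)))). Qed.
Lemma smooth2_dv f : smooth2 f -> smooth2 (dv f).
Proof. intros H k; exact (proj2 (proj2 (H (S k)))). Qed.
Lemma smooth2_exu (f : Pt2 -> R) (q : Pt2) : smooth2 f -> ex_derive (fun t => f (t, snd q)) (fst q).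
Proof. intros H; exact (proj1 (proj1 (H 1%nat) q)). Qed.
Lemma smooth2_exv (f : Pt2 -> R) (q : Pt2) : smooth2 f -> ex_derive (fun t => f (fst q, t)) (snd q).
Proof. intros H; exact (proj2 (proj1 (H 1%nat) q)). Qed.

Lemma Ck2_ext k f g : (forall q, f q = g q) -> Ck2 k f -> Ck2 k g.
Proof. intros H; replace g with f; [auto| apply functional_extensionality; auto]. Qed.

Lemma Ck2_plus k : forall f g, Ck2 k f -> Ck2 k g -> Ck2 k (fun r => f r + g r).
Proof.
  induction k; intros f g Hf Hg.
  - intros q. apply (continuous_plus (V:=R_NormedModule) f g); [apply Hf|apply Hg].
  - destruct Hf as [Ef [Uf Vf]]; destruct Hg as [Eg [Ug Vg]].
    split; [|split].
    + intros q; split; apply (ex_derive_plus (V:=R_NormedModule)); apply Ef || apply Eg.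
    + apply Ck2_ext with (fun r => du f r + du g r).
      * intros q; unfold du; rewrite Derive_plus; auto; [apply Ef|apply Eg].
      * apply IHk; auto.
    + apply Ck2_ext with (fun r => dv f r + dv g r).
      * intros q; unfold dv; rewrite Derive_plus; auto; [apply Ef|apply Eg].
      * apply IHk; auto.
Qed.

Lemma Up2_plus k f g : Up2 k f -> Up2 k g -> Up2 k (fun r => f r + g r).
Proof. intros Hf Hg j Hj; apply Ck2_plus; auto. Qed.

Lemma Up2_S k f : Up2 (S k) f -> Up2 k f.
Proof. intros H j Hj; apply H; lia. Qed.
Lemma Up2_du k f : Up2 (S k) f -> Up2 k (du f).
Proof. intros H j Hj; exact (proj1 (proj2 (H (S j) ltac:(lia)))). Qed.
Lemma Up2_dv k f : Up2 (S k) f -> Up2 k (dv f).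
Proof. intros H j Hj; exact (proj2 (proj2 (H (S j) ltac:(lia)))). Qed.

Lemma Up2_mult k : forall f g, Up2 k f -> Up2 k g -> Up2 k (fun r => f r * g r).
Proof.
  induction k; intros f g Hf Hg j Hj.
  - destruct j; [|lia]. intros q.
    apply (continuous_mult (K:=R_AbsRing) f g); [apply (Hf 0%nat)|apply (Hg 0%nat)]; lia.
  - destruct j.
    + intros q.
      apply (continuous_mult (K:=R_AbsRing) f g); [apply (Hf 0%nat)|apply (Hg 0%nat)]; lia.
    + assert (Ef := proj1 (Hf 1%nat ltac:(lia))); assert (Eg := proj1 (Hg 1%nat ltac:(lia))).
      split; [|split].
      * intros q; split; apply ex_derive_mult; apply Ef || apply Eg.
      * apply Ck2_ext with (fun r => du f r * g r + f r * du g r).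
        { intros q; unfold du; rewrite Derive_mult; [rewrite <- surjective_pairing; reflexivity|apply Ef|apply Eg]. }
        apply Ck2_plus; apply IHk; first [apply Up2_du; assumption | apply Up2_dv; assumption | apply Up2_S; assumption | lia].
      * apply Ck2_ext with (fun r => dv f r * g r + f r * dv g r).
        { intros q; unfold dv; rewrite Derive_mult; [rewrite <- surjective_pairing; reflexivity|apply Ef|apply Eg]. }
        apply Ck2_plus; apply IHk; first [apply Up2_du; assumption | apply Up2_dv; assumption | apply Up2_S; assumption | lia].
Qed.

Lemma Ck2_const j : forall c, Ck2 j (fun _ => c).
Proof.
  induction j; intros c.
  - intros q; apply continuous_const.
  - split; [|split].
    + intros q; split; apply ex_derive_const.
    + apply (Ck2_ext j (fun _ => 0)); [|apply IHj]. intros q; unfold du; symmetry; apply Derive_const.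
    + apply (Ck2_ext j (fun _ => 0)); [|apply IHj]. intros q; unfold dv; symmetry; apply Derive_const.
Qed.
Lemma Up2_const k c : Up2 k (fun _ => c).
Proof. intros j _; apply Ck2_const. Qed.

Lemma Up2_inv k : forall f, smooth2 f -> (forall r, f r <> 0) -> Up2 k (fun r => / f r).
Proof.
  induction k; intros f Hf Hnz j Hj.
  - destruct j; [|lia]. intros q. apply continuous_comp.
    + apply (Hf 0%nat).
    + apply continuous_Rinv; auto.
  - destruct j.
    + intros q. apply continuous_comp; [apply (Hf 0%nat)|apply continuous_Rinv; auto].
    + split; [|split].
      * intros q; split; apply ex_derive_inv; auto; apply (proj1 (Hf 1%nat) q).
      * apply Ck2_ext with (fun r => (-1) * du f r * (/ f r * / f r)).
        { intros q; unfold du. rewrite Derive_inv.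
          - simpl. rewrite <- surjective_pairing. field. apply Hnz.
          - apply (proj1 (Hf 1%nat) q).
          - simpl; rewrite <- surjective_pairing; auto. }
        apply (Up2_mult k); [apply Up2_mult; [apply Up2_const| apply smooth2_Up, smooth2_du; auto]| |lia].
        apply Up2_mult; apply IHk; auto.
      * apply Ck2_ext with (fun r => (-1) * dv f r * (/ f r * / f r)).
        { intros q; unfold dv. rewrite Derive_inv.
          - simpl. rewrite <- surjective_pairing. field. apply Hnz.
          - apply (proj2 (proj1 (Hf 1%nat) q)).
          - simpl; rewrite <- surjective_pairing; auto. }
        apply (Up2_mult k); [apply Up2_mult; [apply Up2_const| apply smooth2_Up, smooth2_dv; auto]| |lia].
        apply Up2_mult; apply IHk; auto.
Qed.

Lemma smooth2_plus f g : smooth2 f -> smooth2 g -> smooth2 (fun r => f r + g r).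
Proof. intros; apply Up_smooth2; intros; apply Up2_plus; apply smooth2_Up; auto. Qed.
Lemma smooth2_mult f g : smooth2 f -> smooth2 g -> smooth2 (fun r => f r * g r).
Proof. intros; apply Up_smooth2; intros; apply Up2_mult; apply smooth2_Up; auto. Qed.
Lemma smooth2_const c : smooth2 (fun _ => c).
Proof. apply Up_smooth2; intros; apply Up2_const. Qed.
Lemma smooth2_inv f : smooth2 f -> (forall r, f r <> 0) -> smooth2 (fun r => / f r).
Proof. intros; apply Up_smooth2; intros; apply Up2_inv; auto. Qed.
Lemma smooth2_opp f : smooth2 f -> smooth2 (fun r => - f r).
Proof. intros H. replace (fun r => - f r) with (fun r => (-1) * f r).
  apply smooth2_mult; auto; apply smooth2_const. apply functional_extensionality; intros; ring. Qed.
Lemma smooth2_minus f g : smooth2 f -> smooth2 g -> smooth2 (fun r => f r - g r).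
Proof. intros; apply smooth2_plus; auto; apply smooth2_opp; auto. Qed.

Definition Up3 (k : nat) (f : Vec3 -> R) := forall j, (j <= k)%nat -> Ck3 j f.
Lemma smooth3_Up f : smooth3 f -> forall k, Up3 k f.
Proof. intros H k j _; apply H. Qed.
Lemma Up_smooth3 f : (forall k, Up3 k f) -> smooth3 f.
Proof. intros H k; apply (H k k); lia. Qed.
Lemma smooth3_d1 f : smooth3 f -> smooth3 (dd1 f).
Proof. intros H k; exact (proj1 (proj2 (H (S k)))). Qed.
Lemma smooth3_d2 f : smooth3 f -> smooth3 (dd2 f).
Proof. intros H k; exact (proj1 (proj2 (proj2 (H (S k))))). Qed.
Lemma smooth3_d3 f : smooth3 f -> smooth3 (dd3 f).
Proof. intros H k; exact (proj2 (proj2 (proj2 (H (S k))))). Qed.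
Lemma Ck3_ext k f g : (forall q, f q = g q) -> Ck3 k f -> Ck3 k g.
Proof. intros H; replace g with f; [auto| apply functional_extensionality; auto]. Qed.

Ltac fixeta := repeat rewrite eta3.

Lemma Ck3_plus k : forall f g, Ck3 k f -> Ck3 k g -> Ck3 k (fun r => f r + g r).
Proof.
  induction k; intros f g Hf Hg.
  - intros q. apply (continuous_plus (V:=R_NormedModule) f g); [apply Hf|apply Hg].
  - destruct Hf as [Ef [Uf [Vf Wf]]]; destruct Hg as [Eg [Ug [Vg Wg]]].
    split; [|split; [|split]].
    + intros q; split; [|split]; apply (ex_derive_plus (V:=R_NormedModule)); apply Ef || apply Eg.
    + apply Ck3_ext with (fun r => dd1 f r + dd1 g r); [|apply IHk; auto].
      intros q; unfold Defs.d1; rewrite Derive_plus; auto; [apply Ef|apply Eg].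
    + apply Ck3_ext with (fun r => dd2 f r + dd2 g r); [|apply IHk; auto].
      intros q; unfold Defs.d2; rewrite Derive_plus; auto; [apply Ef|apply Eg].
    + apply Ck3_ext with (fun r => dd3 f r + dd3 g r); [|apply IHk; auto].
      intros q; unfold Defs.d3; rewrite Derive_plus; auto; [apply Ef|apply Eg].
Qed.

Lemma Up3_S k f : Up3 (S k) f -> Up3 k f.
Proof. intros H j Hj; apply H; lia. Qed.
Lemma Up3_d1 k f : Up3 (S k) f -> Up3 k (dd1 f).
Proof. intros H j Hj; exact (proj1 (proj2 (H (S j) ltac:(lia)))). Qed.
Lemma Up3_d2 k f : Up3 (S k) f -> Up3 k (dd2 f).
Proof. intros H j Hj; exact (proj1 (proj2 (proj2 (H (S j) ltac:(lia))))). Qed.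
Lemma Up3_d3 k f : Up3 (S k) f -> Up3 k (dd3 f).
Proof. intros H j Hj; exact (proj2 (proj2 (proj2 (H (S j) ltac:(lia))))). Qed.

Lemma Up3_mult k : forall f g, Up3 k f -> Up3 k g -> Up3 k (fun r => f r * g r).
Proof.
  induction k; intros f g Hf Hg j Hj.
  - destruct j; [|lia]. intros q.
    apply (continuous_mult (K:=R_AbsRing) f g); [apply (Hf 0%nat)|apply (Hg 0%nat)]; lia.
  - destruct j.
    + intros q.
      apply (continuous_mult (K:=R_AbsRing) f g); [apply (Hf 0%nat)|apply (Hg 0%nat)]; lia.
    + assert (Ef := proj1 (Hf 1%nat ltac:(lia))); assert (Eg := proj1 (Hg 1%nat ltac:(lia))).
      split; [|split; [|split]].
      * intros q; split; [|split]; apply ex_derive_mult; apply Ef || apply Eg.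
      * apply Ck3_ext with (fun r => dd1 f r * g r + f r * dd1 g r).
        { intros q; unfold Defs.d1; rewrite Derive_mult; [fixeta; reflexivity|apply Ef|apply Eg]. }
        apply Ck3_plus; apply IHk; first [apply Up3_d1; assumption | apply Up3_S; assumption | lia].
      * apply Ck3_ext with (fun r => dd2 f r * g r + f r * dd2 g r).
        { intros q; unfold Defs.d2; rewrite Derive_mult; [fixeta; reflexivity|apply Ef|apply Eg]. }
        apply Ck3_plus; apply IHk; first [apply Up3_d2; assumption | apply Up3_S; assumption | lia].
      * apply Ck3_ext with (fun r => dd3 f r * g r + f r * dd3 g r).
        { intros q; unfold Defs.d3; rewrite Derive_mult; [fixeta; reflexivity|apply Ef|apply Eg]. }
        apply Ck3_plus; apply IHk; first [apply Up3_d3; assumption | apply Up3_S; assumption | lia].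
Qed.

Lemma Ck3_const j : forall c, Ck3 j (fun _ => c).
Proof.
  induction j; intros c.
  - intros q; apply continuous_const.
  - split; [|split; [|split]].
    + intros q; split; [|split]; apply ex_derive_const.
    + apply (Ck3_ext j (fun _ => 0)); [|apply IHj]. intros q; unfold Defs.d1; symmetry; apply Derive_const.
    + apply (Ck3_ext j (fun _ => 0)); [|apply IHj]. intros q; unfold Defs.d2; symmetry; apply Derive_const.
    + apply (Ck3_ext j (fun _ => 0)); [|apply IHj]. intros q; unfold Defs.d3; symmetry; apply Derive_const.
Qed.

Lemma smooth3_plus f g : smooth3 f -> smooth3 g -> smooth3 (fun r => f r + g r).
Proof. intros Hf Hg k; apply Ck3_plus; auto. Qed.
Lemma smooth3_mult f g : smooth3 f -> smooth3 g -> smooth3 (fun r => f r * g r).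
Proof. intros; apply Up_smooth3; intros; apply Up3_mult; apply smooth3_Up; auto. Qed.
Lemma smooth3_const c : smooth3 (fun _ => c).
Proof. intros k; apply Ck3_const. Qed.

Lemma cont_pair {U V W : UniformSpace} (f : U -> V) (g : U -> W) x :
  continuous f x -> continuous g x -> continuous (fun y => (f y, g y)) x.
Proof.
  intros Hf Hg. apply (continuous_comp_2 f g (fun a b => (a, b))); auto.
  apply continuous_ext with (fun y => y). intros [a b]; reflexivity. apply continuous_id.
Qed.

Lemma phi_cont (phi : Pt2 -> Vec3) q : smooth_map23 phi -> continuous phi q.
Proof.
  intros [H1 [H2 H3]].
  apply continuous_ext with (fun r => mk3 (x1 (phi r)) (x2 (phi r)) (x3 (phi r))).
  intros r; apply eta3.
  unfold mk3. apply cont_pair; [apply cont_pair|]; [apply (H1 0%nat)|apply (H2 0%nat)|apply (H3 0%nat)].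
Qed.

Lemma isd_comp_u (g : Vec3 -> R) (phi : Pt2 -> Vec3) (q : Pt2) : smooth3 g -> smooth_map23 phi ->
  is_derive (fun t => g (phi (t, snd q))) (fst q)
   (dd1 g (phi q) * du (fun r => x1 (phi r)) q + dd2 g (phi q) * du (fun r => x2 (phi r)) q
    + dd3 g (phi q) * du (fun r => x3 (phi r)) q).
Proof.
  intros Hg Hp. destruct Hp as [P1 [P2 P3]].
  apply is_derive_ext with (fun t => g (mk3 (x1 (phi (t, snd q))) (x2 (phi (t, snd q))) (x3 (phi (t, snd q))))).
  { intros t; rewrite eta3; reflexivity. }
  assert (E : mk3 (x1 (phi (fst q, snd q))) (x2 (phi (fst q, snd q))) (x3 (phi (fst q, snd q))) = phi q)
    by (rewrite eta3, <- surjective_pairing; reflexivity).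
  pose proof (chain3 g (fun t => x1 (phi (t, snd q))) (fun t => x2 (phi (t, snd q)))
               (fun t => x3 (phi (t, snd q))) (fst q)
               (du (fun r => x1 (phi r)) q) (du (fun r => x2 (phi r)) q) (du (fun r => x3 (phi r)) q)) as C.
  cbv beta in C. rewrite E in C. apply C.
  - intros x; apply (proj1 (Hg 1%nat) x).
  - intros x; apply (proj1 (Hg 1%nat) x).
  - intros x; apply (proj1 (Hg 1%nat) x).
  - apply (smooth3_d1 g Hg 0%nat).
  - apply (smooth3_d2 g Hg 0%nat).
  - apply (smooth3_d3 g Hg 0%nat).
  - apply Derive_correct. exact (smooth2_exu (fun r => x1 (phi r)) q P1).
  - apply Derive_correct. exact (smooth2_exu (fun r => x2 (phi r)) q P2).
  - apply Derive_correct. exact (smooth2_exu (fun r => x3 (phi r)) q P3).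
Qed.

Lemma isd_comp_v (g : Vec3 -> R) (phi : Pt2 -> Vec3) (q : Pt2) : smooth3 g -> smooth_map23 phi ->
  is_derive (fun t => g (phi (fst q, t))) (snd q)
   (dd1 g (phi q) * dv (fun r => x1 (phi r)) q + dd2 g (phi q) * dv (fun r => x2 (phi r)) q
    + dd3 g (phi q) * dv (fun r => x3 (phi r)) q).
Proof.
  intros Hg Hp. destruct Hp as [P1 [P2 P3]].
  apply is_derive_ext with (fun t => g (mk3 (x1 (phi (fst q, t))) (x2 (phi (fst q, t))) (x3 (phi (fst q, t))))).
  { intros t; rewrite eta3; reflexivity. }
  assert (E : mk3 (x1 (phi (fst q, snd q))) (x2 (phi (fst q, snd q))) (x3 (phi (fst q, snd q))) = phi q)
    by (rewrite eta3, <- surjective_pairing; reflexivity).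
  pose proof (chain3 g (fun t => x1 (phi (fst q, t))) (fun t => x2 (phi (fst q, t)))
               (fun t => x3 (phi (fst q, t))) (snd q)
               (dv (fun r => x1 (phi r)) q) (dv (fun r => x2 (phi r)) q) (dv (fun r => x3 (phi r)) q)) as C.
  cbv beta in C. rewrite E in C. apply C.
  - intros x; apply (proj1 (Hg 1%nat) x).
  - intros x; apply (proj1 (Hg 1%nat) x).
  - intros x; apply (proj1 (Hg 1%nat) x).
  - apply (smooth3_d1 g Hg 0%nat).
  - apply (smooth3_d2 g Hg 0%nat).
  - apply (smooth3_d3 g Hg 0%nat).
  - apply Derive_correct. exact (smooth2_exv (fun r => x1 (phi r)) q P1).
  - apply Derive_correct. exact (smooth2_exv (fun r => x2 (phi r)) q P2).
  - apply Derive_correct. exact (smooth2_exv (fun r => x3 (phi r)) q P3).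
Qed.

Lemma du_comp (g : Vec3 -> R) (phi : Pt2 -> Vec3) (q : Pt2) : smooth3 g -> smooth_map23 phi ->
  du (fun r => g (phi r)) q =
   dd1 g (phi q) * du (fun r => x1 (phi r)) q + dd2 g (phi q) * du (fun r => x2 (phi r)) q
    + dd3 g (phi q) * du (fun r => x3 (phi r)) q.
Proof. intros; unfold du at 1; apply is_derive_unique, isd_comp_u; auto. Qed.
Lemma dv_comp (g : Vec3 -> R) (phi : Pt2 -> Vec3) (q : Pt2) : smooth3 g -> smooth_map23 phi ->
  dv (fun r => g (phi r)) q =
   dd1 g (phi q) * dv (fun r => x1 (phi r)) q + dd2 g (phi q) * dv (fun r => x2 (phi r)) q
    + dd3 g (phi q) * dv (fun r => x3 (phi r)) q.
Proof. intros; unfold dv at 1; apply is_derive_unique, isd_comp_v; auto. Qed.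

Lemma Up2_comp phi k : smooth_map23 phi -> forall g, smooth3 g -> Up2 k (fun r => g (phi r)).
Proof.
  intros Hp. pose proof Hp as [P1 [P2 P3]]. induction k; intros g Hg j Hj.
  - destruct j; [|lia]. intros q. apply (continuous_comp phi g q); [apply phi_cont; auto| apply (Hg 0%nat)].
  - destruct j.
    + intros q. apply (continuous_comp phi g q); [apply phi_cont; auto| apply (Hg 0%nat)].
    + split; [|split].
      * intros q; split; eexists; [apply isd_comp_u|apply isd_comp_v]; auto.
      * apply Ck2_ext with (fun r => dd1 g (phi r) * du (fun r => x1 (phi r)) r + dd2 g (phi r) * du (fun r => x2 (phi r)) r
          + dd3 g (phi r) * du (fun r => x3 (phi r)) r).
        { intros q; symmetry; apply du_comp; auto. }
        apply (Up2_plus k); [apply Up2_plus| |lia]; apply Up2_mult;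
          first [apply IHk; first [apply smooth3_d1 | apply smooth3_d2 | apply smooth3_d3]; auto
                | apply smooth2_Up, smooth2_du; auto].
      * apply Ck2_ext with (fun r => dd1 g (phi r) * dv (fun r => x1 (phi r)) r + dd2 g (phi r) * dv (fun r => x2 (phi r)) r
          + dd3 g (phi r) * dv (fun r => x3 (phi r)) r).
        { intros q; symmetry; apply dv_comp; auto. }
        apply (Up2_plus k); [apply Up2_plus| |lia]; apply Up2_mult;
          first [apply IHk; first [apply smooth3_d1 | apply smooth3_d2 | apply smooth3_d3]; auto
                | apply smooth2_Up, smooth2_dv; auto].
Qed.

Lemma smooth2_comp phi g : smooth_map23 phi -> smooth3 g -> smooth2 (fun r => g (phi r)).
Proof. intros; apply Up_smooth2; intros; apply Up2_comp; auto. Qed.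

Lemma schwarz2 (f : Pt2 -> R) (q : Pt2) : smooth2 f -> du (dv f) q = dv (du f) q.
Proof.
  intros Hf. destruct q as [x y].
  pose proof (Schwarz (fun a b => f (a, b)) x y) as S.
  apply S; clear S.
  - apply locally_2d_forall. intros u v. split; [|split; [|split]].
    + exact (smooth2_exu f (u, v) Hf).
    + exact (smooth2_exv f (u, v) Hf).
    + exact (smooth2_exu (dv f) (u, v) (smooth2_dv f Hf)).
    + exact (smooth2_exv (du f) (u, v) (smooth2_du f Hf)).
  - apply continuity_2d_pt_filterlim.
    apply (filterlim_ext (du (dv f))). intros [a b]; reflexivity.
    exact (smooth2_du _ (smooth2_dv f Hf) 0%nat (x, y)).
  - apply continuity_2d_pt_filterlim.
    apply (filterlim_ext (dv (du f))). intros [a b]; reflexivity.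
    exact (smooth2_dv _ (smooth2_du f Hf) 0%nat (x, y)).
Qed.

Lemma cont_slice12 (g : Vec3 -> R) c x y : continuous g (mk3 x y c) ->
  continuous (fun z : R * R => g (mk3 (fst z) (snd z) c)) (x, y).
Proof.
  intros H. apply (continuous_comp (fun z : R*R => mk3 (fst z) (snd z) c) g (x,y)); [|exact H].
  unfold mk3. apply cont_pair; [apply cont_pair|]; [apply continuous_fst|apply continuous_snd|apply continuous_const].
Qed.
Lemma cont_slice13 (g : Vec3 -> R) c x y : continuous g (mk3 x c y) ->
  continuous (fun z : R * R => g (mk3 (fst z) c (snd z))) (x, y).
Proof.
  intros H. apply (continuous_comp (fun z : R*R => mk3 (fst z) c (snd z)) g (x,y)); [|exact H].
  unfold mk3. apply cont_pair; [apply cont_pair|]; [apply continuous_fst|apply continuous_const|apply continuous_snd].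
Qed.
Lemma cont_slice23 (g : Vec3 -> R) c x y : continuous g (mk3 c x y) ->
  continuous (fun z : R * R => g (mk3 c (fst z) (snd z))) (x, y).
Proof.
  intros H. apply (continuous_comp (fun z : R*R => mk3 c (fst z) (snd z)) g (x,y)); [|exact H].
  unfold mk3. apply cont_pair; [apply cont_pair|]; [apply continuous_const|apply continuous_fst|apply continuous_snd].
Qed.

Lemma ex3_1 (f : Vec3 -> R) a b c : smooth3 f -> ex_derive (fun t => f (mk3 t b c)) a.
Proof. intros H; exact (proj1 (proj1 (H 1%nat) (mk3 a b c))). Qed.
Lemma ex3_2 (f : Vec3 -> R) a b c : smooth3 f -> ex_derive (fun t => f (mk3 a t c)) b.
Proof. intros H; exact (proj1 (proj2 (proj1 (H 1%nat) (mk3 a b c)))). Qed.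
Lemma ex3_3 (f : Vec3 -> R) a b c : smooth3 f -> ex_derive (fun t => f (mk3 a b t)) c.
Proof. intros H; exact (proj2 (proj2 (proj1 (H 1%nat) (mk3 a b c)))). Qed.

Lemma schwarz12 (f : Vec3 -> R) (p : Vec3) : smooth3 f -> dd1 (dd2 f) p = dd2 (dd1 f) p.
Proof.
  intros Hf. destruct p as [[x y] c].
  pose proof (Schwarz (fun a b => f (mk3 a b c)) x y) as S.
  apply S; clear S.
  - apply locally_2d_forall. intros u v. split; [|split; [|split]].
    + exact (ex3_1 f u v c Hf).
    + exact (ex3_2 f u v c Hf).
    + exact (ex3_1 (dd2 f) u v c (smooth3_d2 f Hf)).
    + exact (ex3_2 (dd1 f) u v c (smooth3_d1 f Hf)).
  - apply continuity_2d_pt_filterlim.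
    exact (cont_slice12 (dd1 (dd2 f)) c x y (smooth3_d1 _ (smooth3_d2 f Hf) 0%nat _)).
  - apply continuity_2d_pt_filterlim.
    exact (cont_slice12 (dd2 (dd1 f)) c x y (smooth3_d2 _ (smooth3_d1 f Hf) 0%nat _)).
Qed.

Lemma schwarz13 (f : Vec3 -> R) (p : Vec3) : smooth3 f -> dd1 (dd3 f) p = dd3 (dd1 f) p.
Proof.
  intros Hf. destruct p as [[x c] y].
  pose proof (Schwarz (fun a b => f (mk3 a c b)) x y) as S.
  apply S; clear S.
  - apply locally_2d_forall. intros u v. split; [|split; [|split]].
    + exact (ex3_1 f u c v Hf).
    + exact (ex3_3 f u c v Hf).
    + exact (ex3_1 (dd3 f) u c v (smooth3_d3 f Hf)).
    + exact (ex3_3 (dd1 f) u c v (smooth3_d1 f Hf)).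
  - apply continuity_2d_pt_filterlim.
    exact (cont_slice13 (dd1 (dd3 f)) c x y (smooth3_d1 _ (smooth3_d3 f Hf) 0%nat _)).
  - apply continuity_2d_pt_filterlim.
    exact (cont_slice13 (dd3 (dd1 f)) c x y (smooth3_d3 _ (smooth3_d1 f Hf) 0%nat _)).
Qed.

Lemma schwarz23 (f : Vec3 -> R) (p : Vec3) : smooth3 f -> dd2 (dd3 f) p = dd3 (dd2 f) p.
Proof.
  intros Hf. destruct p as [[c x] y].
  pose proof (Schwarz (fun a b => f (mk3 c a b)) x y) as S.
  apply S; clear S.
  - apply locally_2d_forall. intros u v. split; [|split; [|split]].
    + exact (ex3_2 f c u v Hf).
    + exact (ex3_3 f c u v Hf).
    + exact (ex3_2 (dd3 f) c u v (smooth3_d3 f Hf)).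
    + exact (ex3_3 (dd2 f) c u v (smooth3_d2 f Hf)).
  - apply continuity_2d_pt_filterlim.
    exact (cont_slice23 (dd2 (dd3 f)) c x y (smooth3_d2 _ (smooth3_d3 f Hf) 0%nat _)).
  - apply continuity_2d_pt_filterlim.
    exact (cont_slice23 (dd3 (dd2 f)) c x y (smooth3_d3 _ (smooth3_d2 f Hf) 0%nat _)).
Qed.

Lemma d1_plus (f g : Vec3 -> R) p : smooth3 f -> smooth3 g -> dd1 (fun y => f y + g y) p = dd1 f p + dd1 g p.
Proof. intros; unfold Defs.d1; apply Derive_plus; apply ex3_1; auto. Qed.
Lemma d2_plus (f g : Vec3 -> R) p : smooth3 f -> smooth3 g -> dd2 (fun y => f y + g y) p = dd2 f p + dd2 g p.
Proof. intros; unfold Defs.d2; apply Derive_plus; apply ex3_2; auto. Qed.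
Lemma d3_plus (f g : Vec3 -> R) p : smooth3 f -> smooth3 g -> dd3 (fun y => f y + g y) p = dd3 f p + dd3 g p.
Proof. intros; unfold Defs.d3; apply Derive_plus; apply ex3_3; auto. Qed.
Lemma d1_mult (f g : Vec3 -> R) p : smooth3 f -> smooth3 g -> dd1 (fun y => f y * g y) p = dd1 f p * g p + f p * dd1 g p.
Proof. intros; unfold Defs.d1; rewrite Derive_mult; [rewrite eta3; auto| |]; apply ex3_1; auto. Qed.
Lemma d2_mult (f g : Vec3 -> R) p : smooth3 f -> smooth3 g -> dd2 (fun y => f y * g y) p = dd2 f p * g p + f p * dd2 g p.
Proof. intros; unfold Defs.d2; rewrite Derive_mult; [rewrite eta3; auto| |]; apply ex3_2; auto. Qed.
Lemma d3_mult (f g : Vec3 -> R) p : smooth3 f -> smooth3 g -> dd3 (fun y => f y * g y) p = dd3 f p * g p + f p * dd3 g p.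
Proof. intros; unfold Defs.d3; rewrite Derive_mult; [rewrite eta3; auto| |]; apply ex3_3; auto. Qed.

Lemma vec_eq (a b : Vec3) : x1 a = x1 b -> x2 a = x2 b -> x3 a = x3 b -> a = b.
Proof. destruct a as [[a1 a2] a3], b as [[b1 b2] b3]; unfold x1, x2, x3; simpl; intros H1 H2 H3; rewrite H1, H2, H3; reflexivity. Qed.

Definition dirC (C : Vec3 -> Vec3) (v p : Vec3) : Vec3 :=
  mk3 (x1 v * dd1 (fun y => x1 (C y)) p + x2 v * dd2 (fun y => x1 (C y)) p + x3 v * dd3 (fun y => x1 (C y)) p)
      (x1 v * dd1 (fun y => x2 (C y)) p + x2 v * dd2 (fun y => x2 (C y)) p + x3 v * dd3 (fun y => x2 (C y)) p)
      (x1 v * dd1 (fun y => x3 (C y)) p + x2 v * dd2 (fun y => x3 (C y)) p + x3 v * dd3 (fun y => x3 (C y)) p).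
Definition omA (C : Vec3 -> Vec3) (v w p : Vec3) : R :=
  vdot (dirC C v p) w - vdot (C p) v * vdot (C p) w.

Ltac sm3 := repeat first
  [ assumption
  | apply smooth3_plus | apply smooth3_mult | apply smooth3_const
  | apply smooth3_d1 | apply smooth3_d2 | apply smooth3_d3 ].

Ltac dexp := repeat first
  [ rewrite d1_plus by sm3 | rewrite d2_plus by sm3 | rewrite d3_plus by sm3
  | rewrite d1_mult by sm3 | rewrite d2_mult by sm3 | rewrite d3_mult by sm3 ].

Lemma curvT_formula (C X Y Z : Vec3 -> Vec3) (p : Vec3) :
  smooth_field3 C -> smooth_field3 X -> smooth_field3 Y -> smooth_field3 Z ->
  curvT C X Y Z p = vsub (vscal (omA C (X p) (Z p) p) (Y p)) (vscal (omA C (Y p) (Z p) p) (X p)).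
Proof.
  intros [C1 [C2 C3]] [X1 [X2 X3]] [Y1 [Y2 Y3]] [Z1 [Z2 Z3]].
  assert (S1 : forall f, smooth3 f -> dd1 (dd2 f) p = dd2 (dd1 f) p) by (intros; apply schwarz12; auto).
  assert (S2 : forall f, smooth3 f -> dd1 (dd3 f) p = dd3 (dd1 f) p) by (intros; apply schwarz13; auto).
  assert (S3 : forall f, smooth3 f -> dd2 (dd3 f) p = dd3 (dd2 f) p) by (intros; apply schwarz23; auto).
  unfold curvT, snm, lie3, nabla0, omA, dirC, vsub, vadd, vopp, vscal.
  unfold ddir3, vdot.
  apply vec_eq; cbn [x1 x2 x3 mk3 fst snd]; dexp;
  rewrite ?(S1 _ Z1), ?(S1 _ Z2), ?(S1 _ Z3), ?(S2 _ Z1), ?(S2 _ Z2), ?(S2 _ Z3),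
     ?(S3 _ Z1), ?(S3 _ Z2), ?(S3 _ Z3). all: ring.
Qed.

Lemma vdot_sub_scal a b (u w z : Vec3) :
  vdot (vsub (vscal a u) (vscal b w)) z = a * vdot u z - b * vdot w z.
Proof. unfold vdot, vsub, vadd, vopp, vscal; cbn [x1 x2 x3 mk3 fst snd]; ring. Qed.

Lemma vdot_sym u w : vdot u w = vdot w u.
Proof. unfold vdot; ring. Qed.

Lemma secT_formula (C F1 F2 : Vec3 -> Vec3) (p : Vec3) :
  smooth_field3 C -> smooth_field3 F1 -> smooth_field3 F2 ->
  vdot (F1 p) (F1 p) = 1 -> vdot (F2 p) (F2 p) = 1 -> vdot (F1 p) (F2 p) = 0 ->
  secT C F1 F2 p = - / 2 * (omA C (F1 p) (F1 p) p + omA C (F2 p) (F2 p) p).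
Proof.
  intros HC H1 H2 e11 e22 e12. unfold secT.
  rewrite !curvT_formula by assumption.
  rewrite !vdot_sub_scal. rewrite (vdot_sym (F2 p) (F1 p)) in *. rewrite e11, e22, e12. ring.
Qed.

Lemma du_plus (f g : Pt2 -> R) (q : Pt2) : smooth2 f -> smooth2 g -> du (fun r => f r + g r) q = du f q + du g q.
Proof. intros; unfold du; apply Derive_plus; apply smooth2_exu; auto. Qed.
Lemma dv_plus (f g : Pt2 -> R) (q : Pt2) : smooth2 f -> smooth2 g -> dv (fun r => f r + g r) q = dv f q + dv g q.
Proof. intros; unfold dv; apply Derive_plus; apply smooth2_exv; auto. Qed.
Lemma du_mult (f g : Pt2 -> R) (q : Pt2) : smooth2 f -> smooth2 g -> du (fun r => f r * g r) q = du f q * g q + f q * du g q.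
Proof. intros; unfold du; rewrite Derive_mult; [rewrite <- surjective_pairing; auto| |]; apply smooth2_exu; auto. Qed.
Lemma dv_mult (f g : Pt2 -> R) (q : Pt2) : smooth2 f -> smooth2 g -> dv (fun r => f r * g r) q = dv f q * g q + f q * dv g q.
Proof. intros; unfold dv; rewrite Derive_mult; [rewrite <- surjective_pairing; auto| |]; apply smooth2_exv; auto. Qed.

Lemma dS_plus X (f g : Pt2 -> R) (q : Pt2) : smooth2 f -> smooth2 g -> dS X (fun r => f r + g r) q = dS X f q + dS X g q.
Proof. intros; unfold dS; rewrite du_plus, dv_plus by auto; ring. Qed.
Lemma dS_mult X (f g : Pt2 -> R) (q : Pt2) : smooth2 f -> smooth2 g -> dS X (fun r => f r * g r) q = dS X f q * g q + f q * dS X g q.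
Proof. intros; unfold dS; rewrite du_mult, dv_mult by auto; ring. Qed.

Definition smoothV (W : Pt2 -> Vec3) : Prop :=
  smooth2 (fun r => x1 (W r)) /\ smooth2 (fun r => x2 (W r)) /\ smooth2 (fun r => x3 (W r)).
Definition smoothT (X : Pt2 -> Pt2) : Prop :=
  smooth2 (fun r => fst (X r)) /\ smooth2 (fun r => snd (X r)).

Lemma dS_comm (X Y : Pt2 -> Pt2) (f : Pt2 -> R) (q : Pt2) : smoothT X -> smoothT Y -> smooth2 f ->
  dS X (dS Y f) q = dS Y (dS X f) q + dS (lieS X Y) f q.
Proof.
  intros [X1 X2] [Y1 Y2] Hf.
  pose proof (schwarz2 f q Hf) as Sw.
  unfold lieS, dS. cbn [fst snd].
  rewrite !du_plus, !dv_plus, !du_mult, !dv_mult;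
   try solve [repeat first [assumption | apply smooth2_mult | apply smooth2_du | apply smooth2_dv]].
  rewrite Sw. ring.
Qed.

Lemma dS_vdot X (A B : Pt2 -> Vec3) (q : Pt2) : smoothV A -> smoothV B ->
  dS X (fun r => vdot (A r) (B r)) q = vdot (nabla0S X A q) (B q) + vdot (A q) (nabla0S X B q).
Proof.
  intros [A1 [A2 A3]] [B1 [B2 B3]]. unfold vdot, nabla0S. cbn [x1 x2 x3 mk3 fst snd].
  rewrite !dS_plus, !dS_mult; try solve [repeat first [assumption | apply smooth2_mult | apply smooth2_plus]].
  ring.
Qed.

Lemma tang_dot (N : Pt2 -> Vec3) w (q : Pt2) v :
  vdot (tang N w q) v = vdot w v - vdot w (N q) * vdot (N q) v.
Proof. unfold tang, vdot, vsub, vadd, vopp, vscal; cbn [x1 x2 x3 mk3 fst snd]; ring. Qed.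

Lemma normal_realize phi N X (r : Pt2) : unit_normal phi N -> vdot (N r) (realize phi X r) = 0.
Proof.
  intros H. destruct (H r) as [h1 [h2 _]]. revert h1 h2.
  unfold realize, vdot, vadd, vscal, pu, pv; cbn [x1 x2 x3 mk3 fst snd]. intros h1 h2.
  transitivity (fst (X r) * (x1 (N r) * du (fun r0 => x1 (phi r0)) r + x2 (N r) * du (fun r0 => x2 (phi r0)) r +
       x3 (N r) * du (fun r0 => x3 (phi r0)) r) + snd (X r) * (x1 (N r) * dv (fun r0 => x1 (phi r0)) r + x2 (N r) * dv (fun r0 => x2 (phi r0)) r +
       x3 (N r) * dv (fun r0 => x3 (phi r0)) r)); [ring|]. rewrite h1, h2; ring.
Qed.

Definition cross (a b : Vec3) : Vec3 :=
  mk3 (x2 a * x3 b - x3 a * x2 b) (x3 a * x1 b - x1 a * x3 b) (x1 a * x2 b - x2 a * x1 b).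

Lemma sumsq0 x y z : x*x + y*y + z*z = 0 -> x = 0 /\ y = 0 /\ z = 0.
Proof. intros; repeat split; nra. Qed.

Lemma imm_delta phi (q : Pt2) : immersion phi -> fE phi q * fG phi q - fF phi q ^ 2 <> 0.
Proof.
  intros Him Hd. unfold fE, fF, fG in Hd.
  set (a := pu phi q) in *; set (b := pv phi q) in *.
  destruct (Req_dec (vdot b b) 0) as [Hb|Hb].
  - unfold vdot in Hb. apply sumsq0 in Hb as [b1 [b2 b3]].
    destruct (Him q 0 1) as [_ H]; [|lra].
    fold a b. apply vec_eq; unfold vadd, vscal; cbn [x1 x2 x3 mk3 fst snd]; rewrite ?b1, ?b2, ?b3; ring.
  - assert (Hw : forall i, i = x1 (vadd (vscal (vdot b b) a) (vscal (- vdot a b) b)) \/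
       i = x2 (vadd (vscal (vdot b b) a) (vscal (- vdot a b) b)) \/
       i = x3 (vadd (vscal (vdot b b) a) (vscal (- vdot a b) b)) -> i = 0).
    { set (w := vadd (vscal (vdot b b) a) (vscal (- vdot a b) b)).
      assert (E : vdot w w = vdot b b * (vdot a a * vdot b b - vdot a b ^ 2)).
      { unfold w, vdot, vadd, vscal; cbn [x1 x2 x3 mk3 fst snd]; ring. }
      rewrite Hd, Rmult_0_r in E. unfold vdot in E. apply sumsq0 in E as [w1 [w2 w3]].
      intros i [H|[H|H]]; rewrite H; auto. }
    destruct (Him q (vdot b b) (- vdot a b)) as [H _]; [|contradiction].
    fold a b. apply vec_eq; cbn [x1 x2 x3 mk3 fst snd]; apply Hw; auto.
Qed.

Lemma cc_delta phi (q : Pt2) :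
  vdot (cross (pu phi q) (pv phi q)) (cross (pu phi q) (pv phi q)) = fE phi q * fG phi q - fF phi q ^ 2.
Proof. unfold fE, fF, fG, cross, vdot; cbn [x1 x2 x3 mk3 fst snd]; ring. Qed.

Lemma tang_cross phi N (r : Pt2) w : unit_normal phi N -> immersion phi ->
  tang N w r = vsub w (vscal (vdot w (cross (pu phi r) (pv phi r)) /
     vdot (cross (pu phi r) (pv phi r)) (cross (pu phi r) (pv phi r))) (cross (pu phi r) (pv phi r))).
Proof.
  intros Hn Him. pose proof (imm_delta phi r Him) as Hd. rewrite <- cc_delta in Hd.
  destruct (Hn r) as [h1 [h2 h3]].
  set (a := pu phi r) in *; set (b := pv phi r) in *; set (n := N r) in *.
  set (c := cross a b) in *. set (s := vdot c c) in *. set (k := vdot n c).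
  assert (E1 : s * x1 n = k * x1 c /\ s * x2 n = k * x2 c /\ s * x3 n = k * x3 c).
  { assert (I1 : s * x1 n - k * x1 c = vdot n b * x1 (cross c a) - vdot n a * x1 (cross c b))
      by (unfold s, k, c, cross, vdot; cbn [x1 x2 x3 mk3 fst snd]; ring).
    assert (I2 : s * x2 n - k * x2 c = vdot n b * x2 (cross c a) - vdot n a * x2 (cross c b))
      by (unfold s, k, c, cross, vdot; cbn [x1 x2 x3 mk3 fst snd]; ring).
    assert (I3 : s * x3 n - k * x3 c = vdot n b * x3 (cross c a) - vdot n a * x3 (cross c b))
      by (unfold s, k, c, cross, vdot; cbn [x1 x2 x3 mk3 fst snd]; ring).
    rewrite h1, h2 in *. lra. }
  destruct E1 as [E1 [E2 E3]].
  assert (K : k * k = s).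
  { assert (s * s = s * (k * k)).
    { transitivity (s * (x1 n * (s * x1 n) + x2 n * (s * x2 n) + x3 n * (s * x3 n))).
      - unfold vdot in h3. replace (x1 n * (s * x1 n) + x2 n * (s * x2 n) + x3 n * (s * x3 n))
          with (s * (x1 n * x1 n + x2 n * x2 n + x3 n * x3 n)) by ring. rewrite h3; ring.
      - rewrite E1, E2, E3. unfold k, vdot. ring. }
    apply Rmult_eq_reg_l with s; [lra|auto]. }
  assert (F : forall i, i = x1 n \/ i = x2 n \/ i = x3 n -> True) by auto.
  assert (G : forall ni ci, s * ni = k * ci -> vdot w n * ni = vdot w c / s * ci).
  { intros ni ci Hi.
    apply Rmult_eq_reg_l with (s * s); [|apply Rmult_integral_contrapositive; auto].
    transitivity ((x1 w * (s * x1 n) + x2 w * (s * x2 n) + x3 w * (s * x3 n)) * (s * ni)).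
    - unfold vdot; ring.
    - rewrite E1, E2, E3, Hi. transitivity ((k * k) * vdot w c * ci). unfold vdot; ring.
      rewrite K. field. auto. }
  unfold tang; apply vec_eq; unfold vsub, vadd, vopp, vscal; cbn [x1 x2 x3 mk3 fst snd];
    fold n; rewrite ?(G _ _ E1), ?(G _ _ E2), ?(G _ _ E3); reflexivity.
Qed.

Ltac sm2 := repeat first
  [ assumption
  | apply smooth2_plus | apply smooth2_mult | apply smooth2_const | apply smooth2_opp
  | apply smooth2_du | apply smooth2_dv ].

Lemma smoothV_add A B : smoothV A -> smoothV B -> smoothV (fun r => vadd (A r) (B r)).
Proof. intros [A1 [A2 A3]] [B1 [B2 B3]]; unfold vadd; cbn [x1 x2 x3 mk3 fst snd]; repeat split; sm2. Qed.
Lemma smoothV_sub A B : smoothV A -> smoothV B -> smoothV (fun r => vsub (A r) (B r)).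
Proof. intros [A1 [A2 A3]] [B1 [B2 B3]]; unfold vsub, vadd, vopp; cbn [x1 x2 x3 mk3 fst snd]; repeat split; sm2. Qed.
Lemma smoothV_scal s A : smooth2 s -> smoothV A -> smoothV (fun r => vscal (s r) (A r)).
Proof. intros Hs [A1 [A2 A3]]; unfold vscal; cbn [x1 x2 x3 mk3 fst snd]; repeat split; sm2. Qed.
Lemma smooth2_vdot A B : smoothV A -> smoothV B -> smooth2 (fun r => vdot (A r) (B r)).
Proof. intros [A1 [A2 A3]] [B1 [B2 B3]]; unfold vdot; sm2. Qed.
Lemma smoothV_pu phi : smooth_map23 phi -> smoothV (pu phi).
Proof. intros [P1 [P2 P3]]; unfold pu; cbn [x1 x2 x3 mk3 fst snd]; repeat split; sm2. Qed.
Lemma smoothV_pv phi : smooth_map23 phi -> smoothV (pv phi).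
Proof. intros [P1 [P2 P3]]; unfold pv; cbn [x1 x2 x3 mk3 fst snd]; repeat split; sm2. Qed.
Lemma smoothV_realize phi X : smooth_map23 phi -> smoothT X -> smoothV (realize phi X).
Proof.
  intros Hp [X1 X2]. unfold realize. apply smoothV_add; apply smoothV_scal; auto.
  apply smoothV_pu; auto. apply smoothV_pv; auto.
Qed.
Lemma smoothV_nabla0S X W : smoothT X -> smoothV W -> smoothV (nabla0S X W).
Proof. intros [X1 X2] [W1 [W2 W3]]; unfold nabla0S, dS; cbn [x1 x2 x3 mk3 fst snd]; repeat split; sm2. Qed.
Lemma smoothV_Cphi (C : Vec3 -> Vec3) phi : smooth_field3 C -> smooth_map23 phi -> smoothV (fun r => C (phi r)).
Proof.
  intros [C1 [C2 C3]] Hp. repeat split.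
  - exact (smooth2_comp phi (fun y => x1 (C y)) Hp C1).
  - exact (smooth2_comp phi (fun y => x2 (C y)) Hp C2).
  - exact (smooth2_comp phi (fun y => x3 (C y)) Hp C3).
Qed.
Lemma smoothV_cross A B : smoothV A -> smoothV B -> smoothV (fun r => cross (A r) (B r)).
Proof. intros [A1 [A2 A3]] [B1 [B2 B3]]; unfold cross; cbn [x1 x2 x3 mk3 fst snd]; repeat split;
  apply smooth2_minus; sm2. Qed.

Lemma smoothV_tang phi N U : smooth_map23 phi -> unit_normal phi N -> immersion phi ->
  smoothV U -> smoothV (fun r => tang N (U r) r).
Proof.
  intros Hp Hn Hi HU.
  replace (fun r => tang N (U r) r) with (fun r => vsub (U r) (vscal (vdot (U r) (cross (pu phi r) (pv phi r)) *
     / vdot (cross (pu phi r) (pv phi r)) (cross (pu phi r) (pv phi r))) (cross (pu phi r) (pv phi r)))).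
  2:{ apply functional_extensionality; intros r; rewrite (tang_cross phi N r); auto. }
  assert (Hc : smoothV (fun r => cross (pu phi r) (pv phi r))) by (apply smoothV_cross; [apply smoothV_pu|apply smoothV_pv]; auto).
  apply smoothV_sub; auto. apply smoothV_scal; auto. apply smooth2_mult.
  - apply smooth2_vdot; auto.
  - apply smooth2_inv. apply smooth2_vdot; auto.
    intros r; rewrite cc_delta; apply imm_delta; auto.
Qed.

Ltac smV := repeat first
  [ assumption
  | apply smoothV_realize | apply smoothV_nabla0S | apply smoothV_Cphi
  | apply smoothV_pu | apply smoothV_pv
  | apply smoothV_add | apply smoothV_sub | apply smoothV_scal | apply smooth2_vdot ].

Lemma nabla0S_add X A B (q : Pt2) : smoothV A -> smoothV B ->
  nabla0S X (fun r => vadd (A r) (B r)) q = vadd (nabla0S X A q) (nabla0S X B q).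
Proof.
  intros [A1 [A2 A3]] [B1 [B2 B3]]. unfold nabla0S, vadd; cbn [x1 x2 x3 mk3 fst snd].
  rewrite !dS_plus by auto. reflexivity.
Qed.
Lemma nabla0S_scal X s A (q : Pt2) : smooth2 s -> smoothV A ->
  nabla0S X (fun r => vscal (s r) (A r)) q = vadd (vscal (dS X s q) (A q)) (vscal (s q) (nabla0S X A q)).
Proof.
  intros Hs [A1 [A2 A3]]. unfold nabla0S, vadd, vscal; cbn [x1 x2 x3 mk3 fst snd].
  rewrite !dS_mult by auto. reflexivity.
Qed.
Lemma nabla0S_Cphi (C : Vec3 -> Vec3) phi X (q : Pt2) : smooth_field3 C -> smooth_map23 phi ->
  nabla0S X (fun r => C (phi r)) q = dirC C (realize phi X q) (phi q).
Proof.
  intros [C1 [C2 C3]] Hp.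
  pose proof (du_comp (fun y => x1 (C y)) phi q C1 Hp) as U1.
  pose proof (du_comp (fun y => x2 (C y)) phi q C2 Hp) as U2.
  pose proof (du_comp (fun y => x3 (C y)) phi q C3 Hp) as U3.
  pose proof (dv_comp (fun y => x1 (C y)) phi q C1 Hp) as V1.
  pose proof (dv_comp (fun y => x2 (C y)) phi q C2 Hp) as V2.
  pose proof (dv_comp (fun y => x3 (C y)) phi q C3 Hp) as V3.
  cbv beta in U1, U2, U3, V1, V2, V3.
  unfold nabla0S, dS, dirC, realize, vadd, vscal, pu, pv; cbn [x1 x2 x3 mk3 fst snd].
  rewrite U1, U2, U3, V1, V2, V3. apply vec_eq; cbn [x1 x2 x3 mk3 fst snd]; ring.
Qed.

Lemma nabla0S_comm X Y W (q : Pt2) : smoothT X -> smoothT Y -> smoothV W ->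
  nabla0S X (nabla0S Y W) q = vadd (nabla0S Y (nabla0S X W) q) (nabla0S (lieS X Y) W q).
Proof.
  intros HX HY [W1 [W2 W3]]. unfold nabla0S at 1 2 4. unfold vadd. cbn [x1 x2 x3 mk3 fst snd].
  unfold nabla0S. cbn [x1 x2 x3 mk3 fst snd].
  apply vec_eq; cbn [x1 x2 x3 mk3 fst snd]; apply dS_comm; auto.
Qed.

Lemma torsion phi X Y (q : Pt2) : smooth_map23 phi -> smoothT X -> smoothT Y ->
  nabla0S X (realize phi Y) q = vadd (nabla0S Y (realize phi X) q) (realize phi (lieS X Y) q).
Proof.
  intros [P1 [P2 P3]] HX HY.
  apply vec_eq; unfold nabla0S, vadd; cbn [x1 x2 x3 mk3 fst snd].
  - change (dS X (dS Y (fun r => x1 (phi r))) q = dS Y (dS X (fun r => x1 (phi r))) q + dS (lieS X Y) (fun r => x1 (phi r)) q).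
    apply dS_comm; auto.
  - change (dS X (dS Y (fun r => x2 (phi r))) q = dS Y (dS X (fun r => x2 (phi r))) q + dS (lieS X Y) (fun r => x2 (phi r)) q).
    apply dS_comm; auto.
  - change (dS X (dS Y (fun r => x3 (phi r))) q = dS Y (dS X (fun r => x3 (phi r))) q + dS (lieS X Y) (fun r => x3 (phi r)) q).
    apply dS_comm; auto.
Qed.

Lemma vdot_add_scal a s b e : vdot (vadd a (vscal s b)) e = vdot a e + s * vdot b e.
Proof. unfold vdot, vadd, vscal; cbn [x1 x2 x3 mk3 fst snd]; ring. Qed.

Lemma nablaS_unfold C phi N X W (q : Pt2) :
  nablaS C phi N X W q = tang N (vadd (nabla0S X W q) (vscal (vdot (C (phi q)) (W q)) (realize phi X q))) q.
Proof. reflexivity. Qed.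

Lemma half (C : Vec3 -> Vec3) phi N X Y Z E (q : Pt2) :
  smooth_field3 C -> smooth_map23 phi -> immersion phi -> unit_normal phi N ->
  smoothT X -> smoothT Y -> smoothT Z -> smoothT E ->
  let uY := fun r => vadd (nabla0S Y (realize phi Z) r)
                 (vscal (vdot (C (phi r)) (realize phi Z r)) (realize phi Y r)) in
  vdot (nablaS C phi N X (nablaS C phi N Y (realize phi Z)) q) (realize phi E q) =
    vdot (nabla0S X (nabla0S Y (realize phi Z)) q) (realize phi E q)
    + (vdot (dirC C (realize phi X q) (phi q)) (realize phi Z q)
       + vdot (C (phi q)) (nabla0S X (realize phi Z) q)) * vdot (realize phi Y q) (realize phi E q)
    + vdot (C (phi q)) (realize phi Z q) * vdot (nabla0S X (realize phi Y) q) (realize phi E q)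
    + vdot (uY q) (N q) * vdot (N q) (nabla0S X (realize phi E) q)
    + vdot (C (phi q)) (tang N (uY q) q) * vdot (realize phi X q) (realize phi E q).
Proof.
  intros HC Hp Hi Hn HX HY HZ HE uY.
  assert (HU : smoothV uY) by (unfold uY; smV).
  assert (HV : smoothV (nablaS C phi N Y (realize phi Z))).
  { apply (smoothV_tang phi N uY); auto. }
  rewrite nablaS_unfold, tang_dot, (normal_realize phi N E q Hn), Rmult_0_r, Rminus_0_r.
  rewrite vdot_add_scal.
  assert (K1 : vdot (nabla0S X (nablaS C phi N Y (realize phi Z)) q) (realize phi E q) =
     dS X (fun r => vdot (nablaS C phi N Y (realize phi Z) r) (realize phi E r)) q
     - vdot (nablaS C phi N Y (realize phi Z) q) (nabla0S X (realize phi E) q)).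
  { rewrite dS_vdot; [lra | auto | apply smoothV_realize; auto]. }
  assert (K2 : (fun r => vdot (nablaS C phi N Y (realize phi Z) r) (realize phi E r)) =
               (fun r => vdot (uY r) (realize phi E r))).
  { apply functional_extensionality; intros r. cbv beta. unfold uY. rewrite nablaS_unfold, tang_dot.
    rewrite (normal_realize phi N E r Hn). ring. }
  rewrite K1, K2. rewrite dS_vdot; auto; [|apply smoothV_realize; auto].
  unfold uY at 1. rewrite nabla0S_add; [| smV | smV].
  rewrite nabla0S_scal; [| smV | smV].
  rewrite dS_vdot; [| smV | smV].
  rewrite nabla0S_Cphi; auto.
  change (nablaS C phi N Y (realize phi Z) q) with (tang N (uY q) q).
  rewrite (tang_dot N (uY q) q (nabla0S X (realize phi E) q)).
  unfold vdot, vadd, vscal; cbn [x1 x2 x3 mk3 fst snd]. ring.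
Qed.

Definition hS (N : Pt2 -> Vec3) X W (q : Pt2) := vdot (nabla0S X W q) (N q).
Definition omS (C : Vec3 -> Vec3) phi N X Z (q : Pt2) :=
  omA C (realize phi X q) (realize phi Z q) (phi q) + vdot (C (phi q)) (N q) * hS N X (realize phi Z) q.

Lemma vdot_sub a b e : vdot (vsub a b) e = vdot a e - vdot b e.
Proof. unfold vdot, vsub, vadd, vopp; cbn [x1 x2 x3 mk3 fst snd]; ring. Qed.
Lemma vdot_add a b e : vdot (vadd a b) e = vdot a e + vdot b e.
Proof. unfold vdot, vadd; cbn [x1 x2 x3 mk3 fst snd]; ring. Qed.

Lemma surf_curv (C : Vec3 -> Vec3) phi N X Y Z E (q : Pt2) :
  smooth_field3 C -> smooth_map23 phi -> immersion phi -> unit_normal phi N ->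
  smoothT X -> smoothT Y -> smoothT Z -> smoothT E ->
  vdot (curvS C phi N X Y Z q) (realize phi E q) =
    hS N Y (realize phi Z) q * hS N X (realize phi E) q
    - hS N X (realize phi Z) q * hS N Y (realize phi E) q
    + omS C phi N X Z q * vdot (realize phi Y q) (realize phi E q)
    - omS C phi N Y Z q * vdot (realize phi X q) (realize phi E q).
Proof.
  intros HC Hp Hi Hn HX HY HZ HE.
  assert (nX : vdot (realize phi X q) (N q) = 0) by (rewrite vdot_sym; apply normal_realize; auto).
  assert (nY : vdot (realize phi Y q) (N q) = 0) by (rewrite vdot_sym; apply normal_realize; auto).
  assert (HL : smoothT (lieS X Y)).
  { destruct HX as [X1 X2], HY as [Y1 Y2]. unfold lieS, dS; split; cbn [fst snd];
    apply smooth2_minus; sm2. }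
  pose proof (half C phi N X Y Z E q HC Hp Hi Hn HX HY HZ HE) as H1.
  pose proof (half C phi N Y X Z E q HC Hp Hi Hn HY HX HZ HE) as H2.
  cbv zeta beta in H1, H2.
  unfold curvS. rewrite !vdot_sub, H1, H2.
  rewrite nablaS_unfold, tang_dot, (normal_realize phi N E q Hn), Rmult_0_r, Rminus_0_r, vdot_add_scal.
  rewrite (nabla0S_comm X Y (realize phi Z) q) by (auto; apply smoothV_realize; auto).
  rewrite (torsion phi X Y q) by auto.
  rewrite !(vdot_sym (C (phi q)) (tang N _ q)), !tang_dot.
  rewrite !vdot_add_scal, nX, nY.
  unfold omS, hS, omA, dirC, vdot, vadd, vscal; cbn [x1 x2 x3 mk3 fst snd]. ring.
Qed.

Lemma hS_formula phi N X Z (q : Pt2) : smooth_map23 phi -> unit_normal phi N -> smoothT Z ->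
  hS N X (realize phi Z) q =
   fst (X q) * fst (Z q) * hL phi N q + (fst (X q) * snd (Z q) + snd (X q) * fst (Z q)) * hM phi N q
   + snd (X q) * snd (Z q) * hN phi N q.
Proof.
  intros Hp Hn [Z1 Z2]. pose proof Hp as [P1 [P2 P3]].
  destruct (Hn q) as [o1 [o2 _]].
  assert (Sw1 : dv (du (fun r0 => x1 (phi r0))) q = du (dv (fun r0 => x1 (phi r0))) q)
    by (symmetry; apply schwarz2; auto).
  assert (Sw2 : dv (du (fun r0 => x2 (phi r0))) q = du (dv (fun r0 => x2 (phi r0))) q)
    by (symmetry; apply schwarz2; auto).
  assert (Sw3 : dv (du (fun r0 => x3 (phi r0))) q = du (dv (fun r0 => x3 (phi r0))) q)
    by (symmetry; apply schwarz2; auto).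
  revert o1 o2.
  unfold hS, hL, hM, hN, nabla0S, realize, vadd, vscal, vdot, pu, pv; cbn [x1 x2 x3 mk3 fst snd].
  intros o1 o2.
  rewrite !dS_plus, !dS_mult by sm2.
  unfold dS.
  Ltac etan := repeat match goal with
    | |- context [du (fun r => ?F r) ?q] => progress change (du (fun r => F r) q) with (du F q)
    | |- context [dv (fun r => ?F r) ?q] => progress change (dv (fun r => F r) q) with (dv F q)
    end.
  cbv beta.
  change (fun r => du (fun r0 => x1 (phi r0)) r) with (du (fun r0 => x1 (phi r0))).
  change (fun r => du (fun r0 => x2 (phi r0)) r) with (du (fun r0 => x2 (phi r0))).
  change (fun r => du (fun r0 => x3 (phi r0)) r) with (du (fun r0 => x3 (phi r0))).
  change (fun r => dv (fun r0 => x1 (phi r0)) r) with (dv (fun r0 => x1 (phi r0))).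
  change (fun r => dv (fun r0 => x2 (phi r0)) r) with (dv (fun r0 => x2 (phi r0))).
  change (fun r => dv (fun r0 => x3 (phi r0)) r) with (dv (fun r0 => x3 (phi r0))).
  rewrite Sw1, Sw2, Sw3.
  set (n1 := x1 (N q)) in *; set (n2 := x2 (N q)) in *; set (n3 := x3 (N q)) in *.
  set (u1 := du (fun r => x1 (phi r)) q) in *; set (u2 := du (fun r => x2 (phi r)) q) in *;
  set (u3 := du (fun r => x3 (phi r)) q) in *.
  set (v1 := dv (fun r => x1 (phi r)) q) in *; set (v2 := dv (fun r => x2 (phi r)) q) in *;
  set (v3 := dv (fun r => x3 (phi r)) q) in *.
  set (A := fst (X q) * du (fun r => fst (Z r)) q + snd (X q) * dv (fun r => fst (Z r)) q).
  set (B := fst (X q) * du (fun r => snd (Z r)) q + snd (X q) * dv (fun r => snd (Z r)) q).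
  set (uu1 := du (du (fun r0 => x1 (phi r0))) q). set (uu2 := du (du (fun r0 => x2 (phi r0))) q).
  set (uu3 := du (du (fun r0 => x3 (phi r0))) q).
  set (uv1 := du (dv (fun r0 => x1 (phi r0))) q). set (uv2 := du (dv (fun r0 => x2 (phi r0))) q).
  set (uv3 := du (dv (fun r0 => x3 (phi r0))) q).
  set (vv1 := dv (dv (fun r0 => x1 (phi r0))) q). set (vv2 := dv (dv (fun r0 => x2 (phi r0))) q).
  set (vv3 := dv (dv (fun r0 => x3 (phi r0))) q).
  transitivity (A * (n1 * u1 + n2 * u2 + n3 * u3) + B * (n1 * v1 + n2 * v2 + n3 * v3) +
    (fst (X q) * fst (Z q) * (uu1 * n1 + uu2 * n2 + uu3 * n3)
     + (fst (X q) * snd (Z q) + snd (X q) * fst (Z q)) * (uv1 * n1 + uv2 * n2 + uv3 * n3)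
     + snd (X q) * snd (Z q) * (vv1 * n1 + vv2 * n2 + vv3 * n3))).
  - unfold A, B. ring.
  - replace (n1 * u1 + n2 * u2 + n3 * u3) with 0 by (rewrite <- o1; ring).
    replace (n1 * v1 + n2 * v2 + n3 * v3) with 0 by (rewrite <- o2; ring).
    cbn [fst snd]; ring.
Qed.

Lemma realize_dot phi X Z (q : Pt2) : vdot (realize phi X q) (realize phi Z q) =
  fst (X q) * fst (Z q) * fE phi q + (fst (X q) * snd (Z q) + snd (X q) * fst (Z q)) * fF phi q
  + snd (X q) * snd (Z q) * fG phi q.
Proof. unfold realize, fE, fF, fG, vdot, vadd, vscal; cbn [x1 x2 x3 mk3 fst snd]; ring. Qed.

Lemma alg_gauss a1 b1 a2 b2 E F G L M Nn :
  E * G - F ^ 2 <> 0 ->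
  a1 * a1 * E + (a1 * b1 + b1 * a1) * F + b1 * b1 * G = 1 ->
  a2 * a2 * E + (a2 * b2 + b2 * a2) * F + b2 * b2 * G = 1 ->
  a1 * a2 * E + (a1 * b2 + b1 * a2) * F + b1 * b2 * G = 0 ->
  let h11 := a1 * a1 * L + (a1 * b1 + b1 * a1) * M + b1 * b1 * Nn in
  let h22 := a2 * a2 * L + (a2 * b2 + b2 * a2) * M + b2 * b2 * Nn in
  let h12 := a1 * a2 * L + (a1 * b2 + b1 * a2) * M + b1 * b2 * Nn in
  let h21 := a2 * a1 * L + (a2 * b1 + b2 * a1) * M + b2 * b1 * Nn in
  let D := E * G - F ^ 2 in
  h11 * h22 - h12 * h21 =
    (G * L - F * M) / D * ((E * Nn - F * M) / D) - (G * M - F * Nn) / D * ((E * M - F * L) / D)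
  /\ h11 + h22 = (G * L - F * M) / D + (E * Nn - F * M) / D.
Proof.
  intros HD u11 u22 u12 h11 h22 h12 h21 D.
  set (dt := a1 * b2 - a2 * b1).
  assert (Dd : dt * dt * D = 1).
  { transitivity ((a1 * a1 * E + (a1 * b1 + b1 * a1) * F + b1 * b1 * G) *
       (a2 * a2 * E + (a2 * b2 + b2 * a2) * F + b2 * b2 * G) -
       (a1 * a2 * E + (a1 * b2 + b1 * a2) * F + b1 * b2 * G) ^ 2).
    - unfold dt, D; ring.
    - rewrite u11, u22, u12; ring. }
  assert (DG : dt * dt * G = a1 * a1 + a2 * a2).
  { transitivity (a2 * a2 * (a1 * a1 * E + (a1 * b1 + b1 * a1) * F + b1 * b1 * G)
      - 2 * a1 * a2 * (a1 * a2 * E + (a1 * b2 + b1 * a2) * F + b1 * b2 * G)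
      + a1 * a1 * (a2 * a2 * E + (a2 * b2 + b2 * a2) * F + b2 * b2 * G)).
    - unfold dt; ring.
    - rewrite u11, u22, u12; ring. }
  assert (DE : dt * dt * E = b1 * b1 + b2 * b2).
  { transitivity (b2 * b2 * (a1 * a1 * E + (a1 * b1 + b1 * a1) * F + b1 * b1 * G)
      - 2 * b1 * b2 * (a1 * a2 * E + (a1 * b2 + b1 * a2) * F + b1 * b2 * G)
      + b1 * b1 * (a2 * a2 * E + (a2 * b2 + b2 * a2) * F + b2 * b2 * G)).
    - unfold dt; ring.
    - rewrite u11, u22, u12; ring. }
  assert (DF : dt * dt * F = - (a1 * b1 + a2 * b2)).
  { transitivity (- (a2 * b2) * (a1 * a1 * E + (a1 * b1 + b1 * a1) * F + b1 * b1 * G)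
      + (a1 * b2 + a2 * b1) * (a1 * a2 * E + (a1 * b2 + b1 * a2) * F + b1 * b2 * G)
      - a1 * b1 * (a2 * a2 * E + (a2 * b2 + b2 * a2) * F + b2 * b2 * G)).
    - unfold dt; ring.
    - rewrite u11, u22, u12; ring. }
  assert (Hdt : dt * dt = / D) by (apply (Rmult_eq_reg_r D); [rewrite Dd; field; exact HD | exact HD]).
  split.
  - transitivity (dt * dt * (L * Nn - M * M)).
    + unfold h11, h22, h12, h21, dt; ring.
    + rewrite Hdt. unfold D in *. field. exact HD.
  - transitivity ((a1 * a1 + a2 * a2) * L + 2 * (a1 * b1 + a2 * b2) * M + (b1 * b1 + b2 * b2) * Nn).
    + unfold h11, h22; ring.
    + rewrite <- DG, <- DE. replace (a1 * b1 + a2 * b2) with (- (dt * dt * F)) by lra.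
      rewrite Hdt. field. exact HD.
Qed.

Theorem mainTheorem2
  (C : Vec3 -> Vec3) (phi : Pt2 -> Vec3) (N : Pt2 -> Vec3)
  (E1 E2 : Pt2 -> Pt2) (F1 F2 : Vec3 -> Vec3) (q : Pt2) :
  smooth_field3 C ->
  smooth_map23 phi -> immersion phi ->
  unit_normal phi N ->
  smooth_map22 E1 -> smooth_map22 E2 ->
  vdot (realize phi E1 q) (realize phi E1 q) = 1 ->
  vdot (realize phi E2 q) (realize phi E2 q) = 1 ->
  vdot (realize phi E1 q) (realize phi E2 q) = 0 ->
  smooth_field3 F1 -> smooth_field3 F2 ->
  F1 (phi q) = realize phi E1 q -> F2 (phi q) = realize phi E2 q ->
  secS C phi N E1 E2 q
  = secT C F1 F2 (phi q) + gaussK phi N q - vdot (C (phi q)) (N q) * meanH phi N q.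
Proof.
  intros HC Hp Hi Hn HE1 HE2 e11 e22 e12 HF1 HF2 F1q F2q.
  assert (T1 : smoothT E1) by exact HE1.
  assert (T2 : smoothT E2) by exact HE2.
  rewrite secT_formula; auto; [| rewrite F1q; auto | rewrite F2q; auto | rewrite F1q, F2q; auto].
  rewrite F1q, F2q.
  unfold secS.
  rewrite (surf_curv C phi N E1 E2 E2 E1 q), (surf_curv C phi N E2 E1 E1 E2 q); auto.
  rewrite (vdot_sym (realize phi E2 q) (realize phi E1 q)), e11, e22, e12.
  unfold omS. rewrite !hS_formula; auto.
  rewrite !realize_dot in e11, e22, e12.
  pose proof (imm_delta phi q Hi) as HD.
  destruct (alg_gauss (fst (E1 q)) (snd (E1 q)) (fst (E2 q)) (snd (E2 q)) (fE phi q) (fF phi q) (fG phi q)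
     (hL phi N q) (hM phi N q) (hN phi N q) HD e11 e22 e12) as [G1 G2].
  cbv zeta in G1, G2.
  unfold gaussK, meanH, shape11, shape12, shape21, shape22.
  rewrite <- G1.
  set (h11 := fst (E1 q) * fst (E1 q) * hL phi N q + (fst (E1 q) * snd (E1 q) + snd (E1 q) * fst (E1 q)) * hM phi N q +
     snd (E1 q) * snd (E1 q) * hN phi N q) in *.
  set (h22 := fst (E2 q) * fst (E2 q) * hL phi N q + (fst (E2 q) * snd (E2 q) + snd (E2 q) * fst (E2 q)) * hM phi N q +
     snd (E2 q) * snd (E2 q) * hN phi N q) in *.
  replace ((fG phi q * hL phi N q - fF phi q * hM phi N q) / (fE phi q * fG phi q - fF phi q ^ 2) +
      (fE phi q * hN phi N q - fF phi q * hM phi N q) / (fE phi q * fG phi q - fF phi q ^ 2)) with (h11 + h22)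
    by (rewrite G2; reflexivity).
  field.
Qed.
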